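(* Let $\alpha=2$ and suppose users bid their true costs. Then the expected utility $\mathbb{E}_{\mathbf{Y}_{\mathcal{W}}}[g(\mathbf{y}_{\mathcal{S}})]$ achieved by the allocation policy of \textsc{SeqTGreedy} (defined in the context) is at least $\Bigl(\frac{e-1}{3e}-\gamma\Bigr)\cdot\mathrm{OPT}$, where $\mathrm{OPT}$ is the expected utility of the optimal adaptive policy \textsc{SeqOpt} with full knowledge of the true costs and $\gamma=f_{\max}/\mathrm{OPT}$.
   Context: Setting. $\mathcal{V}$ is a finite set and $f:2^{\mathcal{V}}\to\mathbb{R}_{\ge0}$ is monotone and submodular. $\mathcal{W}$ is a finite set of $N$ users and $\mathcal{O}\subseteq 2^{\mathcal{V}}$. Each user $w$ has a random sensing profile $Y_w$ with values in $\mathcal{O}$; the $Y_w$ are independent with known distributions, $\mathbf{Y}_{\mathcal{W}}=(Y_w)_{w\in\mathcal{W}}$. For $\mathcal{S}\subseteq\mathcal{W}$ and values $y_s$, write $\mathbf{y}_{\mathcal{S}}=\{(s,y_s):s\in\mathcal{S}\}$ and $g(\mathbf{y}_{\mathcal{S}})=f(\bigcup_{s\in\mathcal{S}}y_s)$. Each user's maximal contribution to the utility is bounded by a constant $f_{\max}$: $g(\mathbf{y}_{\mathcal{S}}\cup\{(w,y)\})-g(\mathbf{y}_{\mathcal{S}})\le f_{\max}$ for all $\mathbf{y}_{\mathcal{S}}$, $w$, $y$. The conditional expected marginal gain is $\Delta_g(w\mid\mathbf{y}_{\mathcal{S}})=\sum_{y\in\mathcal{O}}P(Y_w=y\mid\mathbf{y}_{\mathcal{S}})\,[g(\mathbf{y}_{\mathcal{S}}\cup\{(w,y)\})-g(\mathbf{y}_{\mathcal{S}})]$.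 Each user $w$ has a cost $c_w\ge0$ and bid $b_w$; here $b_w=c_w$. Budget $\mathcal{B}>0$. Allocation policy of \textsc{SeqTGreedy}. Set $\mathcal{S}=\emptyset$, $\mathbf{y}_{\mathcal{S}}=\emptyset$, $\mathcal{W}'=\mathcal{W}$. While $\mathcal{W}'\ne\emptyset$: let $w^*\in\arg\max_{w\in\mathcal{W}'}\Delta_g(w\mid\mathbf{y}_{\mathcal{S}})/b_w$ and $\Delta_{w^*}=\Delta_g(w^*\mid\mathbf{y}_{\mathcal{S}})$. If $\sum_{s\in\mathcal{S}}b_s+b_{w^*}\le\mathcal{B}$: if moreover $b_{w^*}\le\frac{\mathcal{B}}{\alpha}\cdot\frac{\Delta_{w^*}}{\sum_{s\in\mathcal{S}}\Delta_s+\Delta_{w^*}}$ then add $w^*$ to $\mathcal{S}$ (recording $\Delta_{w^*}$), observe the realization $y_{w^*}$ of $Y_{w^*}$, add $(w^*,y_{w^*})$ to $\mathbf{y}_{\mathcal{S}}$, remove $w^*$ from $\mathcal{W}'$; otherwise stop. If the budget test fails, remove $w^*$ from $\mathcal{W}'$. \textsc{SeqOpt}: an adaptive policy is a rule that sequentially selects a next user as a function of the users selected so far and their observed profiles; \textsc{SeqOpt} is an adaptive policy maximizing $\mathbb{E}_{\mathbf{Y}_{\mathcal{W}}}[g(\mathbf{y}_{\mathcal{S}})]$ among adaptive policies whose selected set always satisfies $\sum_{s\in\mathcal{S}}c_s\le\mathcal{B}$ (paying each participant her true cost). *)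

(* Defs.v *)
From HB Require Import structures.
From mathcomp Require Import all_boot all_order all_algebra.
From mathcomp Require Import reals.
From mathcomp Require Import sequences exp.
Set Implicit Arguments. Unset Strict Implicit. Unset Printing Implicit Defensive.
Import Order.TTheory GRing.Theory Num.Theory.
Local Open Scope ring_scope.

Section Defs.
Variables (R : realType) (V W : finType).

(* A (partial) realization y_S : a list of (user, observed profile) pairs. *)
Definition hist := seq (W * {set V}).

Definition gval (f : {set V} -> R) (h : hist) : R :=
  f (\bigcup_(x <- h) x.2).

Definition wf_hist (O : {set {set V}}) (h : hist) : bool :=
  uniq (map fst h) && all (fun x => x.2 \in O) h.

Definition monotone_fun (f : {set V} -> R) : Prop :=
  forall A B : {set V}, A \subset B -> f A <= f B.

Definition submodular (f : {set V} -> R) : Prop :=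
  forall (A B : {set V}) (x : V), A \subset B -> x \notin B ->
    f (x |: B) - f B <= f (x |: A) - f A.

(* p w y = P(Y_w = y); the Y_w are independent, so the joint law of
   the full realization phi is the product measure. *)
Definition prob_real (p : W -> {set V} -> R) (phi : {ffun W -> {set V}}) : R :=
  \prod_(w : W) p w (phi w).

Definition expect (p : W -> {set V} -> R) (X : {ffun W -> {set V}} -> R) : R :=
  \sum_(phi : {ffun W -> {set V}}) prob_real p phi * X phi.

(* Conditional expected marginal gain Delta_g(w | y_S).  By independence of
   the Y_w, P(Y_w = y | y_S) = P(Y_w = y) = p w y for w not observed in y_S. *)
Definition cond_gain (f : {set V} -> R) (p : W -> {set V} -> R)
  (h : hist) (w : W) : R :=
  \sum_(y : {set V}) p w y * (gval f (rcons h (w, y)) - gval f h).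

(* Adaptive policies: next user as a function of the observations so far
   ([None] = stop). *)
Definition policy := hist -> option W.

Definition policy_step (pi : policy) (phi : {ffun W -> {set V}}) (h : hist) : hist :=
  match pi h with
  | Some w => if w \in map fst h then h else rcons h (w, phi w)
  | None => h
  end.

(* The observations collected by [pi] on the realization [phi]
   (at most #|W| users can be selected). *)
Definition run_policy (pi : policy) (phi : {ffun W -> {set V}}) : hist :=
  iter #|W| (policy_step pi phi) [::].

Definition cost_of (c : W -> R) (h : hist) : R := \sum_(x <- h) c x.1.

Definition feasible (c : W -> R) (B : R) (pi : policy) : Prop :=
  forall phi, cost_of c (run_policy pi phi) <= B.

Definition exp_utility (f : {set V} -> R) (p : W -> {set V} -> R) (pi : policy) : R :=
  expect p (fun phi => gval f (run_policy pi phi)).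

Definition argmax_rule (f : {set V} -> R) (p : W -> {set V} -> R) (b : W -> R)
  (choose : hist -> {set W} -> W) : Prop :=
  forall (h : hist) (A : {set W}), A != set0 ->
    choose h A \in A /\
    forall w, w \in A -> cond_gain f p h w / b w <=
                        cond_gain f p h (choose h A) / b (choose h A).

(* State of SeqTGreedy: (observations y_S, remaining users W',
   sum of recorded Delta_s, stopped flag). *)
Definition gstate := (hist * {set W} * R * bool)%type.

Definition greedy_step (f : {set V} -> R) (p : W -> {set V} -> R) (b : W -> R)
  (B alpha : R) (choose : hist -> {set W} -> W) (phi : {ffun W -> {set V}})
  (st : gstate) : gstate :=
  let: (h, Wr, sD, stopped) := st in
  if stopped || (Wr == set0) then st else
  let ws := choose h Wr in
  let D := cond_gain f p h ws in
  if cost_of b h + b ws <= B then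
    (if b ws <= B / alpha * (D / (sD + D))
     then (rcons h (ws, phi ws), Wr :\ ws, sD + D, false)
     else (h, Wr, sD, true))
  else (h, Wr :\ ws, sD, false).

(* Each non-stopping step removes a user from W', so #|W| steps suffice. *)
Definition greedy_run (f : {set V} -> R) (p : W -> {set V} -> R) (b : W -> R)
  (B alpha : R) (choose : hist -> {set W} -> W) (phi : {ffun W -> {set V}}) : hist :=
  (iter #|W| (greedy_step f p b B alpha choose phi) ([::], [set: W], 0, false)).1.1.1.

Definition greedy_utility (f : {set V} -> R) (p : W -> {set V} -> R) (b : W -> R)
  (B alpha : R) (choose : hist -> {set W} -> W) : R :=
  expect p (fun phi => gval f (greedy_run f p b B alpha choose phi)).

End Defs.

(* Main.v *)
Require Import Defs.
From HB Require Import structures.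
From mathcomp Require Import all_boot all_order all_algebra.
From mathcomp Require Import reals.
From mathcomp Require Import sequences exp.
From mathcomp Require Import ring lra.
Set Implicit Arguments. Unset Strict Implicit. Unset Printing Implicit Defensive.
Import Order.TTheory GRing.Theory Num.Theory.
Local Open Scope ring_scope.

Section Aux.
Variables (R : realType) (V W : finType).
Variable p : W -> {set V} -> R.
Hypothesis p_ge0 : forall w y, 0 <= p w y.
Hypothesis p_sum1 : forall w, \sum_(y : {set V}) p w y = 1.

Definition consb (phi : {ffun W -> {set V}}) (L : hist V W) : bool :=
  all (fun x => phi x.1 == x.2) L.

Definition MM (L : hist V W) (X : {ffun W -> {set V}} -> R) : R :=
  \sum_(phi | consb phi L) prob_real p phi * X phi.

Definition PP (L : hist V W) : R := MM L (fun _ => 1).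

Lemma prob_ge0 phi : 0 <= prob_real p phi.
Proof. by apply: prodr_ge0 => w _; apply: p_ge0. Qed.

Lemma MM_ext L X Y : (forall phi, consb phi L -> X phi = Y phi) -> MM L X = MM L Y.
Proof. by move=> H; apply: eq_bigr => phi /H ->. Qed.

Lemma MM_le L X Y : (forall phi, consb phi L -> X phi <= Y phi) -> MM L X <= MM L Y.
Proof.
by move=> H; apply: ler_sum => phi /H HX; apply: ler_wpM2l => //; apply: prob_ge0.
Qed.

Lemma MM_ge0 L X : (forall phi, consb phi L -> 0 <= X phi) -> 0 <= MM L X.
Proof.
by move=> H; apply: sumr_ge0 => phi /H HX; apply: mulr_ge0 => //; apply: prob_ge0.
Qed.

Lemma MM_const L k : MM L (fun _ => k) = k * PP L.
Proof.
rewrite /PP /MM mulr_sumr; apply: eq_bigr => phi _; by rewrite mulr1 mulrC.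
Qed.

Lemma MM_lin L X Y a b :
  MM L (fun phi => a * X phi + b * Y phi) = a * MM L X + b * MM L Y.
Proof.
rewrite /MM !mulr_sumr -big_split /=; apply: eq_bigr => phi _.
by rewrite mulrDr !mulrA ![_ * prob_real _ _]mulrC.
Qed.

Lemma MM_split L w X :
  MM L X = \sum_(y : {set V}) MM (rcons L (w, y)) X.
Proof.
rewrite /MM.
have E y : \sum_(phi | consb phi (rcons L (w, y))) prob_real p phi * X phi =
   \sum_(phi | consb phi L && (phi w == y)) prob_real p phi * X phi.
  by apply: eq_bigl => phi; rewrite /consb all_rcons /= andbC.
rewrite (eq_bigr _ (fun y _ => E y)) /=.
rewrite (exchange_big_dep (fun phi => consb phi L)) /=; last by move=> y phi _ /andP[].
apply: eq_bigr => phi Hc; rewrite (big_pred1 (phi w)) // => y /=; by rewrite Hc eq_sym.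
Qed.

Lemma MM_zero L X : (exists2 x, x \in L & p x.1 x.2 = 0) -> MM L X = 0.
Proof.
case=> x xL px; apply: big1 => phi Hc.
have -> : prob_real p phi = 0.
  rewrite /prob_real (bigD1 x.1) //=.
  by move/allP: Hc => /(_ x xL) /eqP ->; rewrite px mul0r.
by rewrite mul0r.
Qed.

Definition okL (L : hist V W) (v : W) (y : {set V}) : bool :=
  all (fun x => (x.1 == v) ==> (y == x.2)) L.

Lemma consb_forall phi L : consb phi L = [forall v, okL L v (phi v)].
Proof.
apply/allP/forallP => [H v|H x xL].
  by apply/allP => x xL; apply/implyP => /eqP <-; rewrite (eqP (H x xL)).
by move: (H x.1) => /allP /(_ x xL); rewrite eqxx /= => /eqP ->.
Qed.

Lemma prod_ind (b : W -> bool) :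
  \prod_(v : W) (b v)%:R = ([forall v, b v]%:R : R).
Proof.
case: (boolP [forall v, b v]) => [/forallP H|/forallPn [v Hv]].
  by rewrite big1 // => v _; rewrite H.
by rewrite (bigD1 v) //= (negbTE Hv) mul0r.
Qed.

Lemma PP_prod L :
  PP L = \prod_(v : W) \sum_(y : {set V}) p v y * (okL L v y)%:R.
Proof.
rewrite bigA_distr_bigA /= /PP /MM big_mkcond /=.
apply: eq_bigr => phi _.
rewrite big_split /= prod_ind -consb_forall.
by case: (consb phi L); rewrite ?mulr1 ?mulr0.
Qed.

Lemma PP_nil : PP [::] = 1.
Proof.
rewrite PP_prod big1 // => v _.
rewrite -[RHS](p_sum1 v); apply: eq_bigr => y _; by rewrite /okL /= mulr1.
Qed.

Lemma MM_nil X : MM [::] X = expect p X.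
Proof. by []. Qed.

Lemma PP_fresh L w y0 : w \notin map fst L ->
  PP (rcons L (w, y0)) = p w y0 * PP L.
Proof.
move=> wL; rewrite !PP_prod (bigD1 w) //= [in RHS](bigD1 w) //=.
have okw y : okL L w y.
  apply/allP => x xL; apply/implyP => /eqP ex.
  by move: wL; rewrite -ex (map_f fst xL).
have okr v y : okL (rcons L (w, y0)) v y = okL L v y && ((w == v) ==> (y == y0)).
  by rewrite /okL all_rcons andbC.
have Hw : \sum_(y : {set V}) p w y * (okL L w y)%:R = 1.
  by rewrite -[RHS](p_sum1 w); apply: eq_bigr => y _; rewrite okw mulr1.
have Hw' : \sum_(y : {set V}) p w y * (okL (rcons L (w, y0)) w y)%:R = p w y0.
  rewrite (bigD1 y0) //= okr okw !eqxx mulr_natr /= big1 ?addr0 // => y yn.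
  by rewrite okr okw eqxx /= (negbTE yn) mulr0.
rewrite Hw Hw' mul1r; congr (_ * _).
by apply: eq_bigr => v vw; apply: eq_bigr => y _; rewrite okr eq_sym (negbTE vw) andbT.
Qed.

End Aux.

Section Aux2.
Variables (R : realType) (V W : finType).
Variable f : {set V} -> R.
Hypothesis f_mono : monotone_fun f.
Hypothesis f_sub : submodular f.

Definition UU (L : hist V W) : {set V} := \bigcup_(x <- L) x.2.

Lemma gval_U L : gval f L = f (UU L). Proof. by []. Qed.

Lemma UU_rcons L z : UU (rcons L z) = UU L :|: z.2.
Proof. by rewrite /UU big_rcons. Qed.

Lemma UU_cat L K : UU (L ++ K) = UU L :|: UU K.
Proof. by rewrite /UU big_cat. Qed.

Lemma UU_mem (L : hist V W) x : x \in L -> x.2 \subset UU L.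
Proof.
elim: L => [//|z L IH]; rewrite inE /UU big_cons => /orP[/eqP ->|/IH H].
  exact: subsetUl.
by apply: (subset_trans H); apply: subsetUr.
Qed.

Lemma f_setU_ge A Y : f A <= f (A :|: Y).
Proof. by apply: f_mono; apply: subsetUl. Qed.

Lemma submod_set (A B Y : {set V}) : A \subset B ->
  f (B :|: Y) - f B <= f (A :|: Y) - f A.
Proof.
move=> AB; move: {2}#|Y| (erefl #|Y|) => n; elim: n Y => [|n IH] Y HY.
  by move/eqP: HY; rewrite cards_eq0 => /eqP ->; rewrite !setU0 !subrr.
have [x xY] : exists x, x \in Y.
  by apply/set0Pn; rewrite -card_gt0 HY.
have HY' : #|Y :\ x| = n by move: HY; rewrite (cardsD1 x Y) xY add1n => [[]].
have EY : Y = x |: (Y :\ x) by rewrite setD1K.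
have split C : f (C :|: Y) - f C =
   (f (x |: (C :|: (Y :\ x))) - f (C :|: (Y :\ x))) + (f (C :|: (Y :\ x)) - f C).
  by rewrite {1}EY setUCA subrKA.
rewrite split [X in _ <= X]split; apply: lerD; last exact: IH.
case: (boolP (x \in B :|: (Y :\ x))) => xB.
  rewrite (setUidPr _); last by rewrite sub1set.
  by rewrite subrr subr_ge0; apply: f_mono; apply: subsetUr.
by apply: f_sub => //; apply: setSU.
Qed.

End Aux2.

Section QLemma.
Variables (R : realType) (V W : finType).
Variable f : {set V} -> R.
Variable p : W -> {set V} -> R.
Variable c : W -> R.
Variable B : R.
Variable opt : policy V W.
Hypothesis f_mono : monotone_fun f.
Hypothesis f_sub : submodular f.
Hypothesis p_ge0 : forall w y, 0 <= p w y.
Hypothesis p_sum1 : forall w, \sum_(y : {set V}) p w y = 1.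
Hypothesis c_pos : forall w, 0 < c w.
Hypothesis opt_feas : feasible c B opt.

Definition runf (k : hist V W) t phi := iter t (policy_step opt phi) k.

Lemma cost_rcons (k : hist V W) z : cost_of c (rcons k z) = cost_of c k + c z.1.
Proof. by rewrite /cost_of -cats1 big_cat big_seq1. Qed.

Lemma PP_ge0 L : 0 <= PP p L.
Proof. by apply: (MM_ge0 p_ge0) => phi _. Qed.

Lemma sum_PP L w : \sum_(y : {set V}) PP p (rcons L (w, y)) = PP p L.
Proof. by rewrite /PP [in RHS](MM_split p _ w). Qed.

Lemma Q_claim (h : hist V W) r : 0 <= r ->
  (forall w, w \notin map fst h -> cond_gain f p h w <= r * c w) ->
  forall t k,
  MM p (h ++ k) (fun phi => gval f (h ++ runf k t phi) - gval f (h ++ k))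
  <= r * MM p (h ++ k) (fun phi => cost_of c (runf k t phi) - cost_of c k).
Proof.
move=> r0 Hr; elim=> [|t IH] k.
  rewrite /runf /=.
  rewrite (MM_ext p (Y := fun _ => 0)); last by move=> phi _; rewrite subrr.
  rewrite [X in _ <= r * X](MM_ext p (Y := fun _ => 0)); last by move=> phi _; rewrite subrr.
  by rewrite MM_const mul0r mulr0.
have Hstay : forall phi, policy_step opt phi k = k -> runf k t.+1 phi = runf k t phi.
  by move=> phi E; rewrite /runf iterSr E.
case Eo: (opt k) => [w|]; last first.
  rewrite (MM_ext p (Y := fun phi => gval f (h ++ runf k t phi) - gval f (h ++ k))); last first.
    by move=> phi _; rewrite Hstay // /policy_step Eo.
  rewrite [X in _ <= r * X](MM_ext p (Y := fun phi => cost_of c (runf k t phi) - cost_of c k)).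
    exact: IH.
  by move=> phi _; rewrite Hstay // /policy_step Eo.
case: (boolP (w \in map fst k)) => wk.
  rewrite (MM_ext p (Y := fun phi => gval f (h ++ runf k t phi) - gval f (h ++ k))); last first.
    by move=> phi _; rewrite Hstay // /policy_step Eo wk.
  rewrite [X in _ <= r * X](MM_ext p (Y := fun phi => cost_of c (runf k t phi) - cost_of c k)).
    exact: IH.
  by move=> phi _; rewrite Hstay // /policy_step Eo wk.
rewrite (MM_split p _ w) [X in _ <= r * X](MM_split p _ w) mulr_sumr.
pose gain y := gval f (h ++ rcons k (w, y)) - gval f (h ++ k).
have Estep : forall y phi, consb phi (rcons (h ++ k) (w, y)) ->
    runf k t.+1 phi = runf (rcons k (w, y)) t phi.
  move=> y phi; rewrite /consb all_rcons => /andP[/eqP /= Ey _].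
  by rewrite /runf -iterS iterSr /policy_step Eo (negbTE wk) Ey.
have EL : forall y phi, consb phi (rcons (h ++ k) (w, y)) ->
   gval f (h ++ runf k t.+1 phi) - gval f (h ++ k) =
   1 * (gval f (h ++ runf (rcons k (w, y)) t phi) - gval f (h ++ rcons k (w, y))) + gain y * 1.
  by move=> y phi /Estep ->; rewrite /gain; ring.
have ER : forall y phi, consb phi (rcons (h ++ k) (w, y)) ->
   cost_of c (runf k t.+1 phi) - cost_of c k =
   1 * (cost_of c (runf (rcons k (w, y)) t phi) - cost_of c (rcons k (w, y))) + c w * 1.
  by move=> y phi /Estep ->; rewrite cost_rcons /=; ring.
rewrite (eq_bigr _ (fun y _ => MM_ext _ (EL y))) /=.
rewrite [X in _ <= X](eq_bigr _ (fun y _ => congr1 (fun z => r * z) (MM_ext _ (ER y)))) /=.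
under eq_bigr do rewrite MM_lin mul1r MM_const rcons_cat.
under [X in _ <= X]eq_bigr do rewrite MM_lin mul1r MM_const mulrDr rcons_cat.
rewrite !big_split /=; apply: lerD.
  by apply: ler_sum => y _; apply: IH.
under eq_bigr do rewrite mul1r -rcons_cat.
under [X in _ <= X]eq_bigr do rewrite mul1r -rcons_cat mulrA.
case: (boolP (w \in map fst h)) => wh.
  apply: ler_sum => y _.
  rewrite -!MM_const; apply: (MM_le p_ge0) => phi.
  rewrite /consb all_rcons /= => /andP[/eqP Ey Hc].
  have [x xh xw] : exists2 x, x \in h & x.1 = w.
    by move/mapP: wh => [x xh ->]; exists x.
  move: Hc; rewrite /consb all_cat => /andP[/allP /(_ x xh) /eqP Ex _].
  have yU : y \subset UU (h ++ k).
    rewrite -Ey -xw Ex UU_cat; apply: subset_trans (subsetUl _ _).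
    exact: UU_mem.
  rewrite /gain !gval_U -rcons_cat UU_rcons /= (setUidPl yU) subrr.
  by apply: mulr_ge0 => //; apply: ltW.
have whk : w \notin map fst (h ++ k) by rewrite map_cat mem_cat negb_or wh.
under eq_bigr do rewrite PP_fresh // mulrA.
under [X in _ <= X]eq_bigr do rewrite PP_fresh // mulrA.
rewrite -!mulr_suml; apply: ler_wpM2r; first exact: PP_ge0.
rewrite -[X in _ <= X]mulr_sumr p_sum1 mulr1.
apply: le_trans (Hr w wh); rewrite /cond_gain.
apply: ler_sum => y _; rewrite mulrC; apply: ler_wpM2l => //.
rewrite /gain !gval_U -rcons_cat UU_rcons UU_rcons /=.
apply: submod_set => //; rewrite UU_cat; exact: subsetUl.
Qed.


Definition QM (h : hist V W) := MM p h (fun phi => gval f (h ++ run_policy opt phi)).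

Lemma Q4 (h : hist V W) r : 0 <= r ->
  (forall w, w \notin map fst h -> cond_gain f p h w <= r * c w) ->
  QM h - PP p h * gval f h <= r * B * PP p h.
Proof.
move=> r0 Hr; have := Q_claim r0 Hr #|W| [::]; rewrite cats0.
rewrite (MM_ext p (Y := fun phi => 1 * gval f (h ++ run_policy opt phi) + (- gval f h) * 1)); last first.
  by move=> phi _; rewrite /runf mul1r mulr1.
rewrite MM_lin MM_const !mul1r mulNr => H; rewrite /QM mulrC; apply: (le_trans H).
rewrite -mulrA; apply: ler_wpM2l => //.
rewrite -MM_const; apply: (MM_le p_ge0) => phi _.
by rewrite /cost_of big_nil subr0; apply: opt_feas.
Qed.

Lemma QM_ge (h : hist V W) : PP p h * gval f h <= QM h.
Proof.
rewrite mulrC -MM_const; apply: (MM_le p_ge0) => phi _.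
by rewrite !gval_U UU_cat; apply: f_setU_ge.
Qed.

Lemma QM_split (h : hist V W) w : QM h <= \sum_(y : {set V}) QM (rcons h (w, y)).
Proof.
rewrite /QM (MM_split p _ w); apply: ler_sum => y _; apply: (MM_le p_ge0) => phi _.
rewrite !gval_U !UU_cat UU_rcons; apply: f_mono; apply: setSU; exact: subsetUl.
Qed.

End QLemma.

Section Greedy.
Variables (R : realType) (V W : finType).
Variable f : {set V} -> R.
Variable O : {set {set V}}.
Variable p : W -> {set V} -> R.
Variable c : W -> R.
Variables B fmax : R.
Variable choose : hist V W -> {set W} -> W.
Variable opt : policy V W.
Hypothesis f_ge0 : forall A, 0 <= f A.
Hypothesis f_mono : monotone_fun f.
Hypothesis f_sub : submodular f.
Hypothesis p_ge0 : forall w y, 0 <= p w y.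
Hypothesis p_sum1 : forall w, \sum_(y : {set V}) p w y = 1.
Hypothesis p_O : forall w y, p w y != 0 -> y \in O.
Hypothesis H_fmax : forall (h : hist V W) (w : W) (y : {set V}), wf_hist O h -> y \in O ->
     gval f (rcons h (w, y)) - gval f h <= fmax.
Hypothesis c_pos : forall w, 0 < c w.
Hypothesis B_pos : 0 < B.
Hypothesis H_arg : argmax_rule f p c choose.
Hypothesis opt_feas : feasible c B opt.
Hypothesis fmax_ge0 : 0 <= fmax.

Definition gstep phi := greedy_step f p c B 2 choose phi.
Definition Gfrom n st phi := gval f (iter n (gstep phi) st).1.1.1.

Lemma gstep_mono st phi : gval f st.1.1.1 <= gval f (gstep phi st).1.1.1.
Proof.
case: st => [[[h Wr] sD] s]; rewrite /gstep /greedy_step /=.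
case: ifP => // _; case: ifP => _; last by [].
case: ifP => _ //=; rewrite !gval_U UU_rcons; exact: f_setU_ge.
Qed.

Lemma Gfrom_ge n st phi : gval f st.1.1.1 <= Gfrom n st phi.
Proof.
elim: n st => [|n IH] st; first by [].
rewrite /Gfrom iterSr; apply: le_trans (gstep_mono st phi) _; exact: IH.
Qed.

Lemma iter_fix n (st : gstate R V W) phi : gstep phi st = st -> iter n (gstep phi) st = st.
Proof. by move=> H; elim: n => [|n IH] //=; rewrite IH H. Qed.

Lemma gain_ge0 (h : hist V W) w : 0 <= cond_gain f p h w.
Proof.
apply: sumr_ge0 => y _; apply: mulr_ge0 => //.
by rewrite subr_ge0 !gval_U UU_rcons; apply: f_setU_ge.
Qed.

Lemma gain_le (h : hist V W) w : wf_hist O h -> cond_gain f p h w <= fmax.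
Proof.
move=> wf; rewrite -[X in _ <= X]mul1r -(p_sum1 w) mulr_suml.
apply: ler_sum => y _; case: (eqVneq (p w y) 0) => [->|py]; first by rewrite !mul0r.
apply: ler_wpM2l; first exact: p_ge0.
apply: H_fmax; [exact: wf | exact: (p_O py)].
Qed.

Definition kap (b : R) := 1 - expR (- (b / B)).

Lemma kap_ge0 b : 0 <= b -> 0 <= kap b.
Proof.
move=> b0; rewrite /kap subr_ge0 expR_le1 oppr_le0.
by apply: divr_ge0 => //; apply: ltW.
Qed.

Lemma kap_le1 b : kap b <= 1.
Proof. by rewrite /kap lerBlDr lerDl expR_ge0. Qed.

Lemma kap_le b : kap b <= b / B.
Proof. have := expR_ge1Dx (- (b / B)); rewrite /kap; lra. Qed.

Definition LHSI (h : hist V W) (sD : R) :=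
  PP p h * gval f h + kap (B - cost_of c h) * (QM f p opt h - PP p h * gval f h)
   + 2 * (PP p h * (gval f h - f set0 - sD)) - 3 * (PP p h * fmax).

Lemma inv_zero (h : hist V W) sD X :
  ~~ all (fun x => p x.1 x.2 != 0) h -> LHSI h sD <= 3 * MM p h X.
Proof.
move/allPn => [x xh /negPn /eqP px].
have Z Y : MM p h Y = 0 by apply: MM_zero; exists x.
rewrite /LHSI /QM /PP !Z; lra.
Qed.

Lemma inv_base (h : hist V W) Wr sD n :
  Wr = [set w | w \notin map fst h] -> Wr = set0 -> 0 <= sD -> cost_of c h <= B ->
  LHSI h sD <= 3 * MM p h (Gfrom n (h, Wr, sD, false)).
Proof.
move=> HW HW0 HsD Hc.
rewrite (MM_ext p (Y := fun _ => gval f h)); last first.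
  move=> phi _; rewrite /Gfrom iter_fix // HW0.
  by rewrite /gstep /greedy_step /= eqxx.
rewrite MM_const.
have HQ : QM f p opt h - PP p h * gval f h <= 0 * B * PP p h.
  apply: Q4 => // w wh.
  have : w \in Wr by rewrite HW inE.
  by rewrite HW0 inE.
rewrite !mul0r in HQ.
have P0 : 0 <= PP p h by apply: PP_ge0.
have k0 : 0 <= kap (B - cost_of c h) by apply: kap_ge0; rewrite subr_ge0.
have := mulr_ge0_le0 k0 HQ.
have := mulr_ge0 P0 (f_ge0 set0).
have := mulr_ge0 P0 HsD.
have := mulr_ge0 P0 fmax_ge0.
rewrite /LHSI; lra.
Qed.

Lemma inv n : forall (h : hist V W) Wr sD,
  uniq (map fst h) -> Wr = [set w | w \notin map fst h] -> (#|Wr| <= n)%N ->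
  0 <= sD -> cost_of c h <= B ->
  LHSI h sD <= 3 * MM p h (Gfrom n (h, Wr, sD, false)).
Proof.
elim: n => [|n IH] h Wr sD Hu HW Hn HsD Hc.
  apply: inv_base => //; apply/eqP; by rewrite -cards_eq0 -leqn0.
case: (boolP (all (fun x => p x.1 x.2 != 0) h)) => Hall; last exact: inv_zero.
case: (eqVneq Wr set0) => [HW0|HWn]; first exact: inv_base.
have wf : wf_hist O h.
  rewrite /wf_hist Hu /=; apply/allP => x xh; apply: p_O; exact: (allP Hall x xh).
move: (H_arg h HWn); set w := choose h Wr => -[wW Hmax].
have whn : w \notin map fst h by move: wW; rewrite HW inE.
set P := PP p h. set g := gval f h. set Q := QM f p opt h. set D := cond_gain f p h w.
have P0 : 0 <= P by apply: PP_ge0.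
have HQ0 : 0 <= Q - P * g by rewrite subr_ge0; apply: QM_ge.
have D0 : 0 <= D := gain_ge0 h w.
have Dle : D <= fmax := gain_le w wf.
set r := D / c w.
have cw0 := c_pos w.
have r0 : 0 <= r by apply: divr_ge0 => //; apply: ltW.
have HQ : Q - P * g <= r * B * P.
  apply: Q4 => // w' w'h.
  have w'W : w' \in Wr by rewrite HW inE.
  by move/(_ w' w'W): Hmax; rewrite ler_pdivrMr.
have Gstep phi : Gfrom n.+1 (h, Wr, sD, false) phi = Gfrom n (gstep phi (h, Wr, sD, false)) phi.
  by rewrite /Gfrom iterSr.
have Est phi : gstep phi (h, Wr, sD, false) =
  if cost_of c h + c w <= B then
    (if c w <= B / 2 * (D / (sD + D)) then (rcons h (w, phi w), Wr :\ w, sD + D, false)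
     else (h, Wr, sD, true))
  else (h, Wr :\ w, sD, false).
  by rewrite /gstep /greedy_step /= (negbTE HWn).
have Pf0 := mulr_ge0 P0 (f_ge0 set0).
have PsD := mulr_ge0 P0 HsD.
have Pfm := mulr_ge0 P0 fmax_ge0.
have PDle := ler_wpM2l P0 Dle.
have k0 : 0 <= kap (B - cost_of c h) by apply: kap_ge0; rewrite subr_ge0.
case: (boolP (cost_of c h + c w <= B)) => Hb; last first.
  have HG : g * P <= MM p h (Gfrom n.+1 (h, Wr, sD, false)).
    rewrite -MM_const; apply: (MM_le p_ge0) => phi _; rewrite Gstep Est (negbTE Hb).
    exact: (Gfrom_ge n (h, Wr :\ w, sD, false) phi).
  have kb : kap (B - cost_of c h) <= c w / B.
    apply: (le_trans (kap_le _)); apply: ler_wpM2r; first by rewrite invr_ge0 ltW.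
    move: Hb; rewrite -ltNge; lra.
  have F1 : kap (B - cost_of c h) * (Q - P * g) <= P * fmax.
    apply: le_trans (ler_wpM2r HQ0 kb) _.
    apply: le_trans (ler_wpM2l _ HQ) _; first by apply: divr_ge0; apply: ltW.
    have -> : c w / B * (r * B * P) = D * P.
      rewrite /r; field; apply/andP; split; apply: lt0r_neq0 => //.
    by rewrite mulrC.
  rewrite /LHSI -/P -/g -/Q; lra.
case: (boolP (c w <= B / 2 * (D / (sD + D)))) => Hs; last first.
  have HG : g * P = MM p h (Gfrom n.+1 (h, Wr, sD, false)).
    rewrite -MM_const; apply: MM_ext => phi _.
    by rewrite Gstep Est Hb (negbTE Hs) /Gfrom iter_fix.
  have rB : r * B <= 2 * (sD + D).
    case: (eqVneq (sD + D) 0) => [s0|sn0].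
      have D00 : D = 0 by lra.
      rewrite /r D00 !mul0r; lra.
    have sp : 0 < sD + D by rewrite lt_def sn0 /= addr_ge0.
    move: Hs; rewrite -ltNge => Hs.
    have -> : r * B = (B / 2 * (D / (sD + D))) * (2 * (sD + D) / c w).
      rewrite /r; field; apply/andP; split; apply: lt0r_neq0 => //.
    have E2 : 2 * (sD + D) = c w * (2 * (sD + D) / c w).
      field; apply: lt0r_neq0 => //.
    rewrite [X in _ <= X]E2; apply: ler_wpM2r; last exact: ltW.
    by apply: divr_ge0; [apply: mulr_ge0 => //; apply: ltW | apply: ltW].
  have F : kap (B - cost_of c h) * (Q - P * g) <= 2 * (P * sD) + 2 * (P * fmax).
    apply: le_trans (ler_wpM2r HQ0 (kap_le1 _)) _; rewrite mul1r.
    apply: (le_trans HQ); apply: le_trans (ler_wpM2r P0 rB) _.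
    lra.
  rewrite /LHSI -/P -/g -/Q -HG; lra.
set kap' := kap (B - (cost_of c h + c w)).
have Hsplit : MM p h (Gfrom n.+1 (h, Wr, sD, false)) = \sum_(y : {set V})
    MM p (rcons h (w, y)) (Gfrom n (rcons h (w, y), Wr :\ w, sD + D, false)).
  rewrite (MM_split p _ w); apply: eq_bigr => y _; apply: MM_ext => phi.
  rewrite /consb all_rcons => /andP[/eqP /= Ey _].
  by rewrite Gstep Est Hb Hs Ey.
have IHy y : LHSI (rcons h (w, y)) (sD + D) <=
    3 * MM p (rcons h (w, y)) (Gfrom n (rcons h (w, y), Wr :\ w, sD + D, false)).
  apply: IH.
  - by rewrite map_rcons rcons_uniq whn Hu.
  - apply/setP => v; rewrite in_setD1 HW !inE map_rcons mem_rcons inE negb_or.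
    by rewrite andbC.
  - by move: Hn; rewrite (cardsD1 w Wr) wW.
  - by apply: addr_ge0.
  - by rewrite cost_rcons.
rewrite Hsplit mulr_sumr; apply: le_trans (ler_sum _ (fun y _ => IHy y)).
have E y : LHSI (rcons h (w, y)) (sD + D) =
   (3 - kap') * (PP p (rcons h (w, y)) * gval f (rcons h (w, y)))
   + kap' * QM f p opt (rcons h (w, y))
   - (2 * (f set0 + (sD + D)) + 3 * fmax) * PP p (rcons h (w, y)).
  rewrite /LHSI cost_rcons /= -/kap'; ring.
rewrite (eq_bigr _ (fun y _ => E y)) sumrB big_split /= -!mulr_sumr.
have SP : \sum_(y : {set V}) PP p (rcons h (w, y)) = P by apply: sum_PP.
have Sg : \sum_(y : {set V}) p w y * gval f (rcons h (w, y)) = g + D.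
  rewrite /D /cond_gain -[g in RHS]mul1r -(p_sum1 w) mulr_suml -big_split.
  apply: eq_bigr => y _ /=; rewrite /g; ring.
have SA : \sum_(y : {set V}) PP p (rcons h (w, y)) * gval f (rcons h (w, y)) = P * (g + D).
  rewrite -Sg mulr_sumr; apply: eq_bigr => y _.
  rewrite (PP_fresh p_sum1 _ whn) -/P; ring.
have SQ : Q <= \sum_(y : {set V}) QM f p opt (rcons h (w, y)) by apply: QM_split.
rewrite SP SA.
have k'0 : 0 <= kap' by apply: kap_ge0; rewrite subr_ge0.
have kq := ler_wpM2l k'0 SQ.
set E1 := expR (- ((B - cost_of c h) / B)).
set E2 := expR (- ((B - (cost_of c h + c w)) / B)).
have EE : E1 = E2 * expR (- (c w / B)).
  rewrite /E1 /E2 -expRD; congr expR; field; apply: lt0r_neq0.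
  done.
have X1 := expR_ge1Dx (- (c w / B)).
have E20 : 0 <= E2 := expR_ge0 _.
have PD : c w / B * (Q - P * g) <= P * D.
  apply: le_trans (ler_wpM2l _ HQ) _; first by apply: divr_ge0; apply: ltW.
  have -> : c w / B * (r * B * P) = D * P.
    rewrite /r; field; apply/andP; split; apply: lt0r_neq0 => //.
  by rewrite mulrC.
have F1 := ler_wpM2l E20 PD.
have F2 : E2 * (1 - c w / B) * (Q - P * g) <= E1 * (Q - P * g).
  apply: ler_wpM2r => //; rewrite EE; apply: ler_wpM2l => //; lra.
have Hk : kap (B - cost_of c h) = 1 - E1 by [].
have Hk' : kap' = 1 - E2 by [].
rewrite /LHSI -/P -/g -/Q Hk; rewrite Hk' in kq *.
lra.
Qed.

End Greedy.

Theorem theorem4 (R : realType) (V W : finType)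
  (f : {set V} -> R) (O : {set {set V}}) (p : W -> {set V} -> R)
  (c : W -> R) (B fmax : R) (choose : hist V W -> {set W} -> W)
  (opt : policy V W) :
  (forall A, 0 <= f A) -> monotone_fun f -> submodular f ->
  (forall w y, 0 <= p w y) ->
  (forall w, \sum_(y : {set V}) p w y = 1) ->
  (forall w y, p w y != 0 -> y \in O) ->
  (forall (h : hist V W) (w : W) (y : {set V}), wf_hist O h -> y \in O ->
     gval f (rcons h (w, y)) - gval f h <= fmax) ->
  (forall w, 0 < c w) -> 0 < B ->
  (* bids equal true costs: b = c *)
  argmax_rule f p c choose ->
  (* opt is SeqOpt: an optimal budget-feasible adaptive policy *)
  feasible c B opt ->
  (forall pi, feasible c B pi -> exp_utility f p pi <= exp_utility f p opt) ->
  let OPT := exp_utility f p opt in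
  let gamma := fmax / OPT in
  ((expR 1 - 1) / (3 * expR 1) - gamma) * OPT
    <= greedy_utility f p c B 2 choose.
Proof.
move=> f_ge0 f_mono f_sub p_ge0 p_sum1 p_O H_fmax c_pos B_pos H_arg opt_feas _.
change (((expR 1 - 1) / (3 * expR 1) - fmax / exp_utility f p opt) * exp_utility f p opt <= greedy_utility f p c B 2 choose).
have fmax_ge0 : 0 <= fmax.
  pose w0 := choose [::] set0.
  have [y py] : exists y, p w0 y != 0.
    apply/existsP; apply: contraT; rewrite negb_exists => /forallP H.
    have := p_sum1 w0; rewrite big1 => [/eqP|y _]; last by apply/eqP/negPn/H.
    by rewrite eq_sym oner_eq0.
  have := H_fmax [::] w0 y isT (p_O _ _ py).
  apply: le_trans; rewrite subr_ge0 !gval_U UU_rcons; exact: f_setU_ge.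
have Hinv := inv f_ge0 f_mono f_sub p_ge0 p_sum1 p_O H_fmax c_pos B_pos H_arg opt_feas
  fmax_ge0 (n := #|W|) (h := [::]) (Wr := [set: W]) (sD := 0) isT.
have H := Hinv (ltac:(by apply/setP => v; rewrite !inE)) (ltac:(by rewrite cardsT))
  (lexx _) (ltac:(by rewrite /cost_of big_nil; apply: ltW)).
have EG : MM p [::] (Gfrom f p c B choose #|W| ([::], [set: W], 0, false)) =
   greedy_utility f p c B 2 choose by [].
have EQ : QM f p opt [::] = exp_utility f p opt by [].
have EP : PP p [::] = 1 := PP_nil p_sum1.
have Eg : gval f ([::] : hist V W) = f set0 by rewrite /gval big_nil.
have Ec : cost_of c ([::] : hist V W) = 0 by rewrite /cost_of big_nil.
move: H; rewrite /LHSI EG EQ EP Eg Ec subr0 /kap divff ?lt0r_neq0 // expRN.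
set G := greedy_utility f p c B 2 choose.
set OPT := exp_utility f p opt.
have G0 : 0 <= G.
  rewrite /G -EG; apply: (MM_ge0 p_ge0) => phi _; exact: f_ge0.
have e0 : 0 < expR (1 : R) := expR_gt0 1.
have f00 := f_ge0 set0.
have ei0 : 0 < (expR (1 : R))^-1 by rewrite invr_gt0.
have O0 : 0 <= OPT.
  by rewrite /OPT -EQ /QM; apply: (MM_ge0 p_ge0) => phi _; exact: f_ge0.
case: (eqVneq OPT 0) => [->|On0].
  by rewrite mulr0.
have -> : ((expR 1 - 1) / (3 * expR 1) - fmax / OPT) * OPT
   = (1 - (expR 1)^-1) / 3 * OPT - fmax.
  by field; apply/andP; split => //; apply: lt0r_neq0.
have := mulr_ge0 (ltW ei0) f00.
move=> A B'; nra.
Qed.
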